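(* Let $\omega_1,\dots,\omega_n$ be positive reals with $\sum_{k\in[n]}\omega_k=1$ and $r_1,\dots,r_n$ positive reals. For each $k$ let $\theta_k=\arccos(\omega_k/2)$, so $\omega_k=e^{i\theta_k}+e^{-i\theta_k}$, and set $a_{k,j}=r_ke^{ij\theta_k}$ for $(k,j)\in[n]\times\{\pm1\}$. Then: (1) ${}^{\infty,0}\!\sum_{(k,j)}a_{k,j}=\max\{|r_k|:k\in[n]\}$; (2) ${}^{-\infty,0}\!\sum_{(k,j)}a_{k,j}=\min\{|r_k|:k\in[n]\}$; (3) ${}^{0,0}\!\sum_{(k,j)}a_{k,j}=\prod_{k\in[n]}r_k^{\omega_k}$; (4) for every real $\alpha\neq0$, ${}^{\alpha}\!\sum_{(k,j)}a_{k,j}=\big(\sum_{k\in[n]}\omega_kr_k^\alpha\big)^{1/\alpha}$.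
   Context: For $\alpha\in\mathbb{C}\setminus i\mathbb{R}$, $\epsilon_\alpha(0)=0$ and $\epsilon_\alpha(rs)=r^\alpha s$ for $r>0$, $|s|=1$; it is a bijection of $\mathbb{C}$. For a finite family $(a_t)$ in $\mathbb{C}$: ${}^{\alpha}\!\sum_t a_t:=\epsilon_\alpha^{-1}\big(\sum_t\epsilon_\alpha(a_t)\big)$; ${}^{\infty,0}\!\sum_ta_t:=\lim_{\alpha\to+\infty}{}^{\alpha}\!\sum_ta_t$ and ${}^{0,0}\!\sum_ta_t:=\lim_{\alpha\to0^+}{}^{\alpha}\!\sum_ta_t$ (limits over real $\alpha>0$); ${}^{-\infty,0}\!\sum_ta_t:=\lim_{\alpha\to-\infty}{}^{\alpha}\!\sum_ta_t$ (limit over real $\alpha<0$). *)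

(* Defs.v *)
From HB Require Import structures.
From mathcomp Require Import all_boot all_order all_algebra.
From mathcomp Require Import all_classical all_reals all_analysis.
From mathcomp Require Import complex.
Set Implicit Arguments. Unset Strict Implicit. Unset Printing Implicit Defensive.
Import Order.TTheory GRing.Theory Num.Theory ComplexField.
Import numFieldNormedType.Exports.
Local Open Scope classical_set_scope.
Local Open Scope ring_scope.
Local Open Scope complex_scope.

Section Defs.
Variable R : realType.

(* epsilon_alpha for real alpha: eps 0 = 0, and for z = r s with r = |z| > 0,
   |s| = 1 (so s = z / |z|), eps (r s) = r^alpha s. *)
Definition eps (alpha : R) (z : R[i]) : R[i] :=
  if z == 0 then 0
  else ((powR (Normc.normc z) alpha)%:C * (z / (Normc.normc z)%:C)).

(* the inverse map epsilon_alpha^{-1} (epsilon_alpha is a bijection of C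
   for alpha <> 0): the (unique) z with eps alpha z = w *)
Definition eps_inv (alpha : R) (w : R[i]) : R[i] :=
  xget 0 [set z | eps alpha z = w].

Definition alpha_sum (I : finType) (alpha : R) (a : I -> R[i]) : R[i] :=
  eps_inv alpha (\sum_(t : I) eps alpha (a t)).

Definition expi (x : R) : R[i] := (cos x) +i* (sin x).

(* min over k in [n] of f k (correct for n >= 1: the fold is seeded by the
   maximum, which is one of the values) *)
Definition min_over (n : nat) (f : 'I_n -> R) : R :=
  \big[Num.min/ \big[Num.max/0]_(k < n) f k]_(k < n) f k.

End Defs.

(* Main.v *)
Require Import Defs.
From HB Require Import structures.
From mathcomp Require Import all_boot all_order all_algebra.
From mathcomp Require Import all_classical all_reals all_analysis.
From mathcomp Require Import complex.
Import Order.TTheory GRing.Theory Num.Theory ComplexField.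
Import numFieldNormedType.Exports.
Local Open Scope classical_set_scope.
Local Open Scope ring_scope.
Local Open Scope complex_scope.
From mathcomp Require Import ring lra.
Lemma normc_real {R : realType} (c : R) : 0 <= c -> Normc.normc c%:C = c.
Proof. move=> c0; rewrite /Normc.normc /= expr0n /= addr0 sqrtr_sqr ger0_norm //. Qed.

Lemma normc_expi {R : realType} (x : R) : Normc.normc (expi x) = 1.
Proof. by rewrite /Normc.normc /expi /= cos2Dsin2 sqrtr1. Qed.

Lemma eps_pol {R : realType} (alpha c x : R) : 0 < c ->
  eps alpha (c%:C * expi x) = (powR c alpha)%:C * expi x.
Proof.
move=> c0; rewrite /eps Normc.normcM normc_real ?ltW // normc_expi mulr1.
have cC0 : c%:C != 0 :> R[i] by rewrite (inj_eq (@complexI _)) gt_eqF.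
have e0 : expi x != 0.
  apply/negP => /eqP h; have := @normc_expi _ x; rewrite h Normc.normc0.
  by move=> /eqP; rewrite eq_sym oner_eq0.
rewrite mulf_eq0 (negbTE cC0) (negbTE e0) /=.
by rewrite [c%:C * _]mulrC mulfK.
Qed.
Lemma expi0 {R : realType} : expi (0 : R) = 1.
Proof. by rewrite /expi cos0 sin0. Qed.

Lemma eps_real {R : realType} (alpha c : R) : 0 < c ->
  eps alpha c%:C = (powR c alpha)%:C.
Proof. by move=> c0; have := eps_pol alpha c 0 c0; rewrite expi0 !mulr1. Qed.

Lemma eps_inv_pos {R : realType} (alpha s : R) : alpha != 0 -> 0 < s ->
  eps_inv alpha s%:C = (powR s alpha^-1)%:C.
Proof.
move=> a0 s0; rewrite /eps_inv; case: xgetP; last first.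
  move=> /(_ (powR s alpha^-1)%:C) H; exfalso; apply: H => /=.
  by rewrite eps_real ?powR_gt0 // -powRrM mulVf // powRr1 // ltW.
move=> z _ /= Hz.
have z0 : z != 0.
  apply/negP => /eqP zz; move: Hz; rewrite zz /eps eqxx => /esym.
  by move/complexI => /eqP; rewrite gt_eqF.
have N0 : 0 < Normc.normc z.
  rewrite lt_neqAle; apply/andP; split.
    by apply/negP => /eqP /esym /Normc.eq0_normc /eqP; rewrite (negbTE z0).
  by case: z {Hz z0} => u v; rewrite /Normc.normc sqrtr_ge0.
set N := Normc.normc z in N0 Hz.
have Hz0 := Hz.
move: Hz; rewrite /eps (negbTE z0) -/N => Hz.
have NC0 : N%:C != 0 by rewrite (inj_eq (@complexI _)) gt_eqF.
have NaC0 : (N `^ alpha)%:C != 0 by rewrite (inj_eq (@complexI _)) gt_eqF ?powR_gt0.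
have zE : z = (s * N / N `^ alpha)%:C.
  rewrite !rmorphM /= fmorphV /= -Hz; field.
  by rewrite NC0 NaC0.
have c0 : 0 < s * N / N `^ alpha by rewrite divr_gt0 ?mulr_gt0 ?powR_gt0.
move: zE; set c := s * N / N `^ alpha => zE.
move: Hz0; rewrite zE eps_real // => /complexI <-.
by rewrite -powRrM mulfV // powRr1 // ltW.
Qed.
Lemma w_le1 {R : realType} n (w : 'I_n -> R) (hw : forall k, 0 < w k)
  (hsum : \sum_(k < n) w k = 1) k : w k <= 1.
Proof.
rewrite -hsum (bigD1 k) //= lerDl sumr_ge0 // => i _; exact: ltW.
Qed.

Lemma sum_eps {R : realType} n (w r : 'I_n -> R) (hw : forall k, 0 < w k)
  (hsum : \sum_(k < n) w k = 1) (hr : forall k, 0 < r k) alpha :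
  \sum_(t : 'I_n * bool) eps alpha ((r t.1)%:C *
     expi ((if t.2 then 1 else -1) * acos (w t.1 / 2))) =
  (\sum_(k < n) w k * powR (r k) alpha)%:C.
Proof.
rewrite -(pair_bigA _ (fun k b => eps alpha ((r k)%:C *
     expi ((if b then 1 else -1) * acos (w k / 2))))) rmorph_sum.
apply: eq_bigr => k _; rewrite big_bool /= !eps_pol // -mulrDr.
rewrite mul1r mulN1r /expi cosN sinN.
have -> : cos (acos (w k / 2)) = w k / 2.
  apply: acosK; rewrite in_itv /=; apply/andP; split.
    by apply: le_trans (ltW (divr_gt0 (hw k) _)) => //; rewrite lerN10.
  by rewrite ler_pdivrMr // mul1r (le_trans (@w_le1 _ _ _ hw hsum k)) // ler1n.
rewrite rmorphM /= mulrC; congr (_ * _); apply/eqP; rewrite eq_complex /= subrr eqxx andbT.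
by apply/eqP; field.
Qed.

Lemma normC_real {R : realType} (x : R) : `|x%:C| = `|x|%:C :> R[i].
Proof. by rewrite normc_def /= expr0n /= addr0 sqrtr_sqr. Qed.

Lemma cvgC {R : realType} {T : Type} {F : set_system T} {FF : Filter F}
  (f : T -> R) (l : R) : f @ F --> l ->
  ((fun x => (f x)%:C) : T -> (R[i] : numClosedFieldType)) @ F --> (l%:C : (R[i] : numClosedFieldType)).
Proof.
move=> fl; apply/cvgrPdist_lt => e e0.
move: (e0); rewrite ltcE /= => /andP[/eqP Ie Re0].
move/cvgrPdist_lt: fl => /(_ _ Re0); apply: filterS => x hx.
have -> : e = (complex.Re e)%:C by case: e e0 Ie {Re0 hx} => a b /= _ ->.
by rewrite -rmorphB normC_real ltcR.
Qed.

Lemma deriv_term {R : realType} (c d : R) :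
  is_derive (0:R) 1 (fun a : R => d * expR (a * c)) (d * c).
Proof.
have h1 : is_derive (0:R) 1 (fun a : R => a * c) c.
  have -> : (fun a : R => a * c) = c \*: id by apply/funext => a; rewrite /= mulrC.
  by apply: is_derive_eq; rewrite /GRing.scale /= mulr1.
have h2 : is_derive (0:R) 1 (expR \o (fun a : R => a * c)) (expR (0 * c) * c).
  exact: is_derive1_comp.
rewrite mul0r expR0 mul1r in h2.
have -> : (fun a : R => d * expR (a * c)) = d \*: (expR \o (fun a : R => a * c)) by [].
exact: is_deriveZ.
Qed.

Local Close Scope complex_scope.

Definition Pf {R : realType} {n} (w r : 'I_n -> R) (a : R) :=
  \sum_(k < n) w k * expR (a * ln (r k)).

Lemma Pf_ge {R : realType} {n} (w r : 'I_n -> R) (hw : forall k, 0 < w k) a k :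
  w k * expR (a * ln (r k)) <= Pf w r a.
Proof.
rewrite /Pf (bigD1 k) //= lerDl sumr_ge0 // => i _.
by rewrite mulr_ge0 // ?ltW // expR_ge0.
Qed.

Lemma Pf_gt0 {R : realType} {n} (w r : 'I_n -> R) (hw : forall k, 0 < w k) a (k : 'I_n) :
  0 < Pf w r a.
Proof. by apply: lt_le_trans (Pf_ge w r hw a k); rewrite mulr_gt0 // expR_gt0. Qed.

Lemma core_bound {R : realType} {n} (w r : 'I_n -> R) (hw : forall k, 0 < w k)
  (hsum : \sum_(k < n) w k = 1) a k
  (hk : forall k', a * ln (r k') <= a * ln (r k)) :
  `|ln (Pf w r a) - a * ln (r k)| <= - ln (w k).
Proof.
have P0 := Pf_gt0 w r hw a k.
rewrite ler_norml; apply/andP; split.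
  rewrite opprK lerBrDr -[X in X + _]expRK -[X in _ + X]expRK -lnM ?posrE ?expR_gt0 //.
  rewrite ler_ln ?posrE ?mulr_gt0 ?expR_gt0 // lnK ?posrE //.
  exact: Pf_ge.
apply: (@le_trans _ _ 0); last first.
  by rewrite oppr_ge0 ln_le0 // (@w_le1 _ _ _ hw hsum k).
rewrite subr_le0 -[X in _ <= X]expRK ler_ln ?posrE ?expR_gt0 //.
apply: (@le_trans _ _ (\sum_(k' < n) w k' * expR (a * ln (r k)))).
  apply: ler_sum => i _; apply: ler_wpM2l; [exact: ltW|rewrite ler_expR; exact: hk].
by rewrite -mulr_suml hsum mul1r.
Qed.

Lemma g_bound {R : realType} (f : R -> R) (L c a : R) : a != 0 ->
  `|f a - a * L| <= c -> `|a^-1 * f a - L| <= c / `|a|.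
Proof.
move=> a0 h; have -> : a^-1 * f a - L = a^-1 * (f a - a * L) by field.
by rewrite normrM normfV mulrC ler_wpM2r // invr_ge0.
Qed.

Lemma cvg_pinfty_bound {R : realType} (g : R -> R) (L c : R) :
  (forall a, 0 < a -> `|g a - L| <= c / `|a|) -> g x @[x --> +oo] --> L.
Proof.
move=> H; apply/cvgrPdist_lt => e e0; near=> a.
have a0 : 0 < a by near: a; apply: nbhs_pinfty_gt; rewrite num_real.
have h : c / e < a by near: a; apply: nbhs_pinfty_gt; rewrite num_real.
rewrite distrC; apply: le_lt_trans (H a a0) _.
by rewrite gtr0_norm // ltr_pdivrMr // mulrC -ltr_pdivrMr.
Unshelve. all: by end_near. Qed.

Lemma cvg_ninfty_bound {R : realType} (g : R -> R) (L c : R) :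
  (forall a, a < 0 -> `|g a - L| <= c / `|a|) -> g x @[x --> -oo] --> L.
Proof.
move=> H; apply/cvgrPdist_lt => e e0; near=> a.
have a0 : a < 0 by near: a; apply: nbhs_ninfty_lt; rewrite num_real.
have h : a < - (c / e) by near: a; apply: nbhs_ninfty_lt; rewrite num_real.
rewrite distrC; apply: le_lt_trans (H a a0) _.
rewrite ltr0_norm // ltr_pdivrMr ?oppr_gt0 // mulrC -ltr_pdivrMr //.
by rewrite ltrNr.
Unshelve. all: by end_near. Qed.

Lemma dnbhs_right {R : realType} (f : R -> R) (l : R) :
  f x @[x --> (0:R)^'] --> l -> f x @[x --> (0:R)^'+] --> l.
Proof.
move=> H; apply: cvg_trans H; apply: cvg_fmap2 => A /=; rewrite /within /=.
rewrite /dnbhs /within /=; apply: filterS => y h yp; apply: h; exact: lt0r_neq0.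
Qed.

Lemma lim_zero {R : realType} {n} (w r : 'I_n -> R) (hw : forall k, 0 < w k)
  (hsum : \sum_(k < n) w k = 1) (k0 : 'I_n) :
  (fun a => a^-1 * ln (Pf w r a)) x @[x --> (0:R)^'+] -->
  \sum_(k < n) w k * ln (r k).
Proof.
have P0 : Pf w r 0 = 1.
  by rewrite /Pf -hsum; apply: eq_bigr => k _; rewrite mul0r expR0 mulr1.
have hP : is_derive (0:R) 1 (Pf w r) (\sum_(k < n) w k * ln (r k)).
  have -> : Pf w r = \sum_(k < n) (fun a => w k * expR (a * ln (r k))).
    by apply/funext => a; rewrite fct_sumE.
  by apply: is_derive_sum => k; exact: deriv_term.
have Pp : 0 < Pf w r 0 by rewrite P0.
have hL := is_derive1_comp (is_derive1_ln Pp) hP.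
have H := @ex_derive _ _ _ _ _ _ _ hL.
have H2 : (fun h : R => h^-1 *: (((@ln R \o Pf w r) \o shift 0) (h *: 1) - (@ln R \o Pf w r) 0))
   @ 0^' --> 'D_1 (@ln R \o Pf w r) 0 := H.
rewrite (@derive_val _ _ _ _ _ _ _ hL) P0 invr1 mul1r in H2.
apply: dnbhs_right; apply: cvg_trans H2; apply: near_eq_cvg; near=> h.
by rewrite /= addr0 P0 ln1 subr0 /GRing.scale /= mulr1.
Unshelve. all: by end_near. Qed.

Local Open Scope complex_scope.

Lemma PfE {R : realType} {n} (w r : 'I_n -> R) (hr : forall k, 0 < r k) a :
  \sum_(k < n) w k * powR (r k) a = Pf w r a.
Proof. by apply: eq_bigr => k _; rewrite /powR gt_eqF. Qed.

Theorem proposition10p1 (R : realType) (n : nat) (w r : 'I_n -> R)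
  (hw : forall k, 0 < w k) (hsum : \sum_(k < n) w k = 1)
  (hr : forall k, 0 < r k) :
  let theta := fun k : 'I_n => acos (w k / 2) in
  let a := fun t : 'I_n * bool =>
    (r t.1)%:C * expi ((if t.2 then 1 else -1) * theta t.1) in
  let S := fun alpha : R => (alpha_sum alpha a : (R[i] : numClosedFieldType)) in
  [/\ S @ +oo --> ((\big[Num.max/0]_(k < n) `|r k|)%:C : (R[i] : numClosedFieldType)),
      S @ -oo --> ((min_over (fun k => `|r k|))%:C : (R[i] : numClosedFieldType)),
      S @ 0^'+ --> ((\prod_(k < n) powR (r k) (w k))%:C : (R[i] : numClosedFieldType))
    & forall alpha : R, alpha != 0 ->
      alpha_sum alpha a = (powR (\sum_(k < n) w k * powR (r k) alpha) alpha^-1)%:C].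
Proof.
move=> theta a S.
have [k0 _] : exists k : 'I_n, True.
  case: n w r hw hsum hr theta a S => [|m] w r hw hsum hr *; last by exists ord0.
  by move: hsum; rewrite big_ord0 => /eqP; rewrite eq_sym oner_eq0.
have H4 : forall alpha : R, alpha != 0 ->
      alpha_sum alpha a = (powR (\sum_(k < n) w k * powR (r k) alpha) alpha^-1)%:C.
  move=> al al0; rewrite /alpha_sum /a /theta sum_eps // eps_inv_pos //.
  by rewrite PfE //; exact: (Pf_gt0 w r hw al k0).
have HS : forall x : R, x != 0 -> (expR (x^-1 * ln (Pf w r x)))%:C = S x.
  move=> x x0; rewrite /S H4 // PfE // /powR gt_eqF //; exact: (Pf_gt0 w r hw x k0).
split => //.
- have [km _ hkm] := @eq_bigmax _ _ _ (0:R) k0 xpredT (fun k => `|r k|) isT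
     (fun i _ => normr_ge0 (r i)).
  have rmax k : r k <= r km.
    by have := le_bigmax 0 (fun k => `|r k|) k; rewrite hkm !gtr0_norm.
  rewrite hkm gtr0_norm //.
  have Hg : (fun x => x^-1 * ln (Pf w r x)) x @[x --> +oo] --> ln (r km).
    apply: (@cvg_pinfty_bound _ _ _ (- ln (w km))) => x x0.
    apply: (@g_bound _ (fun a => ln (Pf w r a))); first exact: lt0r_neq0.
    apply: core_bound => // k'.
    by rewrite ler_pM2l // ler_ln ?posrE.
  have He := cvg_comp _ _ Hg (@continuous_expR R (ln (r km))).
  rewrite lnK ?posrE // in He.
  have HC := cvgC _ _ He.
  apply: cvg_trans; last exact: HC.
  apply: near_eq_cvg; near=> x.
  have x0 : 0 < x by near: x; apply: nbhs_pinfty_gt; rewrite num_real.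
  by rewrite -HS ?lt0r_neq0.
- have [km _ hkm] := @eq_bigmin _ _ _ (\big[Num.max/0]_(k < n) `|r k|) k0 xpredT
     (fun k => `|r k|) isT (fun i _ => le_bigmax 0 (fun k => `|r k|) i).
  have rmin k : r km <= r k.
    by have := bigmin_le (\big[Num.max/0]_(k < n) `|r k|) k (fun k => `|r k|);
      rewrite hkm !gtr0_norm.
  rewrite /min_over hkm gtr0_norm //.
  have Hg : (fun x => x^-1 * ln (Pf w r x)) x @[x --> -oo] --> ln (r km).
    apply: (@cvg_ninfty_bound _ _ _ (- ln (w km))) => x x0.
    apply: (@g_bound _ (fun a => ln (Pf w r a))); first exact: ltr0_neq0.
    apply: core_bound => // k'.
    by rewrite ler_nM2l // ler_ln ?posrE.
  have He := cvg_comp _ _ Hg (@continuous_expR R (ln (r km))).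
  rewrite lnK ?posrE // in He.
  have HC := cvgC _ _ He.
  apply: cvg_trans; last exact: HC.
  apply: near_eq_cvg; near=> x.
  have x0 : x < 0 by near: x; apply: nbhs_ninfty_lt; rewrite num_real.
  by rewrite -HS ?ltr0_neq0.
- have Hg := lim_zero w r hw hsum k0.
  have He := cvg_comp _ _ Hg (@continuous_expR R _).
  have HC := cvgC _ _ He.
  have -> : \prod_(k < n) powR (r k) (w k) = expR (\sum_(k < n) w k * ln (r k)).
    by rewrite expR_sum; apply: eq_bigr => k _; rewrite /powR gt_eqF.
  apply: cvg_trans; last exact: HC.
  apply: near_eq_cvg; near=> x.
  have x0 : 0 < x by near: x; exact: nbhs_right_gt.
  by rewrite -HS ?lt0r_neq0.
Unshelve. all: by end_near. Qed.
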